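(* For any closed $k$-subspace $W\subset k[z_1^{-1}]((z_2))$ with $\mathrm{Supp}(W)=W_0:=k[z_1^{-1},z_2^{-1}]$ there exists a unique operator $S=1+S^-$ with $S^-\in\hat D_1[[\partial_2^{-1}]]\partial_2^{-1}$ such that $W_0S=W$.
   Context: $k$ is a field of characteristic zero, $R=k[[x_1,x_2]]$, $M=(x_1,x_2)$, $\mathrm{ord}_M(a)=\sup\{n:a\in M^n\}$, $\partial_i=\partial/\partial x_i$. $\hat D_1$ is the ring of formal series $\sum_{q\ge0}a_q\partial_1^q$, $a_q\in R$, with $\mathrm{ord}_M(a_q)\to\infty$ as $q\to\infty$ (multiplication by the Leibniz rule). $\hat E_+=\hat D_1((\partial_2^{-1}))$ is the ring of formal Laurent series in $\partial_2^{-1}$ with coefficients in $\hat D_1$ written on the left, multiplied by the Leibniz rule $\partial_2^{n}a=\sum_{j\ge0}\binom{n}{j}\partial_2^j(a)\partial_2^{n-j}$ ($n\in\mathbb Z$); $\hat D_1[[\partial_2^{-1}]]\partial_2^{-1}\subset\hat E_+$. The space $k[z_1^{-1}]((z_2))$ is a right $\hat E_+$-module via $\hat E_+/(x_1\hat E_++x_2\hat E_+)\simeq k[z_1^{-1}]((z_2))$, the class of $p\,\partial_1^i\partial_2^j$ ($p\in R$) corresponding to $p(0,0)z_1^{-i}z_2^{-j}$. On $\mathbb Z^2$ use the anti-lexicographic order: $(a,b)<(c,d)$ iff $b<d$, or $b=d$ and $a<c$. For $0\ne v=\sum v_{ij}z_1^iz_2^j$, its lowest term $\mathrm{LT}(v)$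 is the term $v_{ij}z_1^iz_2^j$, $v_{ij}\ne0$, with minimal $(i,j)$. The support $\mathrm{Supp}(W)$ of a subspace $W$ is the closed subspace (in the two-dimensional local field topology of $k((z_1))((z_2))$) generated by $\mathrm{LT}(a)$, $0\neq a\in W$; thus $\mathrm{Supp}(W)=W_0$ means the exponents of lowest terms of nonzero elements of $W$ are exactly the pairs $(-i,-j)$, $i,j\ge0$. *)

(* Defs.v *)
From HB Require Import structures.
From mathcomp Require Import all_boot all_order all_algebra.
Set Implicit Arguments. Unset Strict Implicit. Unset Printing Implicit Defensive.
Import Order.TTheory GRing.Theory Num.Theory.
Local Open Scope ring_scope.

(* Elements of V = k[z1^-1]((z2)) are coefficient functions
   f : nat -> int -> k,  f a b = coefficient of  z1^(-a) z2^b.            *)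
Definition inV (k : fieldType) (f : nat -> int -> k) : Prop :=
  (exists b0 : int, forall a (b : int), b < b0 -> f a b = 0) /\
  (forall b : int, exists A : nat, forall a : nat, (A <= a)%N -> f a b = 0).

(* Closed k-subspace of V (topology induced from the two-dimensional local
   field k((z1))((z2))): a basic neighbourhood of 0 is given by b0 : int and
   bounds A : int -> nat, and consists of the g with g a b = 0 whenever
   b < b0 and a >= A b  (i.e. the z2^b-coefficient lies in z1^{1-A b} k[[z1]]). *)
Definition closed_subspace (k : fieldType) (W : (nat -> int -> k) -> Prop) : Prop :=
  (forall f, W f -> inV f) /\
  W (fun _ _ => 0) /\
  (forall f g, W f -> W g -> W (fun a b => f a b + g a b)) /\
  (forall (c : k) f, W f -> W (fun a b => c * f a b)) /\
  (forall f, inV f ->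
     (forall (b0 : int) (A : int -> nat), exists w, W w /\
        forall (b : int), b < b0 -> forall a : nat, (A b <= a)%N -> f a b = w a b) ->
     W f).

(* Lowest term (anti-lexicographic order on exponents (-a, b)):
   v has lowest term  v a b z1^(-a) z2^b. *)
Definition lowest_term_at (k : fieldType) (v : nat -> int -> k) (a : nat) (b : int) : Prop :=
  v a b != 0 /\
  (forall (b' : int) (a' : nat), b' < b -> v a' b' = 0) /\
  (forall a' : nat, (a < a')%N -> v a' b = 0).

(* Supp(W) = W0 = k[z1^-1, z2^-1]: the exponents of lowest terms of nonzero
   elements of W are exactly the pairs (-i,-j), i,j >= 0. *)
Definition supp_is_W0 (k : fieldType) (W : (nat -> int -> k) -> Prop) : Prop :=
  (forall w, W w -> forall (a : nat) (b : int), lowest_term_at w a b -> b <= 0) /\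
  (forall i j : nat, exists w, W w /\ lowest_term_at w i (- (j%:Z))).

(* Elements of \hat D_1: d q i j = coefficient of x1^i x2^j in a_q, where the
   element is sum_q a_q d_1^q; condition ord_M(a_q) -> oo.                 *)
Definition inD1 (k : fieldType) (d : nat -> nat -> nat -> k) : Prop :=
  forall N : nat, exists Q : nat, forall q : nat, (Q <= q)%N ->
    forall i j : nat, (i + j < N)%N -> d q i j = 0.

(* Operators S = 1 + S^- in \hat E_+, S^- in \hat D_1[[d_2^-1]] d_2^-1:
   s m q i j = coefficient of x1^i x2^j d_1^q d_2^(-m). *)
Definition isS (k : fieldType) (s : nat -> nat -> nat -> nat -> k) : Prop :=
  (forall q i j : nat, s 0%N q i j = if [&& q == 0%N, i == 0%N & j == 0%N] then 1 else 0) /\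
  (forall m : nat, (0 < m)%N -> inD1 (s m)).

(* Coefficient of z1^(-a) z2^b in  (z1^(-i) z2^(-j)) . S, computed in
   \hat E_+ / (x1 \hat E_+ + x2 \hat E_+):
   d1^i d2^j (p d1^q d2^(-m)) = sum_{al<=i, be<=j} C(i,al) C(j,be)
        (d1^al d2^be p) d1^(i-al+q) d2^(j-be-m),
   whose class is sum C(i,al)C(j,be) al! be! p_{al,be} z1^(-(i-al+q)) z2^(m+be-j). *)
Definition monact (k : fieldType) (s : nat -> nat -> nat -> nat -> k)
  (i j a : nat) (b : int) : k :=
  \sum_(al < i.+1) \sum_(be < j.+1)
    (if (i <= a + al)%N then
       (let e := b + j%:Z - be%:Z in
        if 0 <= e then
          'C(i, al)%:R * 'C(j, be)%:R * (al`!)%:R * (be`!)%:R *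
            s (absz e) (a + al - i)%N al be
        else 0)
     else 0).

Definition inW0S (k : fieldType) (s : nat -> nat -> nat -> nat -> k)
  (f : nat -> int -> k) : Prop :=
  exists (N : nat) (c : nat -> nat -> k), forall (a : nat) (b : int),
    f a b = \sum_(i < N) \sum_(j < N) c i j * monact s i j a b.

(* Main.v *)
Require Import Defs.
From HB Require Import structures.
From mathcomp Require Import all_boot all_order all_algebra.
From mathcomp Require Import zify.
From Stdlib Require Import Classical FunctionalExtensionality ClassicalEpsilon.
Set Implicit Arguments. Unset Strict Implicit.
Import Order.TTheory GRing.Theory Num.Theory.
Local Open Scope ring_scope.

Lemma funext2 (k : Type) (f g : nat -> int -> k) :
  (forall a b, f a b = g a b) -> f = g.
Proof. by move=> H; apply: functional_extensionality => a; apply: functional_extensionality. Qed.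

Lemma natf_ne0 (k : fieldType) (char0 : [pchar k] =i pred0) n : (0 < n)%N -> (n%:R : k) != 0.
Proof.
move=> n0; rewrite natf_neq0_pchar; apply/pnatP => // p pp _.
rewrite !inE /=; move: (char0 p); rewrite !inE /= => ->; done.
Qed.

Lemma inV_lin (k : fieldType) (f g : nat -> int -> k) (c : k) :
  inV f -> inV g -> inV (fun a b => f a b - c * g a b).
Proof.
move=> [[b1 H1] H1'] [[b2 H2] H2']; split.
  exists (Order.min b1 b2) => a b; rewrite lt_min => /andP[h1 h2].
  by rewrite H1 // H2 // mulr0 subr0.
move=> b; have [A1 HA1] := H1' b; have [A2 HA2] := H2' b.
exists (maxn A1 A2) => a; rewrite geq_max => /andP[h1 h2].
by rewrite HA1 // HA2 // mulr0 subr0.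
Qed.


Lemma W_V (k : fieldType) (W : (nat -> int -> k) -> Prop) f :
  closed_subspace W -> W f -> inV f.
Proof. by case=> H _ Wf; apply: H. Qed.

Lemma W_lin (k : fieldType) (W : (nat -> int -> k) -> Prop) f g c :
  closed_subspace W -> W f -> W g -> W (fun a b => f a b - c * g a b).
Proof.
case=> _ [_ [HD [HZ _]]] Wf Wg.
have := HD _ _ Wf (HZ (- c) _ Wg).
by congr W; apply: funext2 => a b; rewrite mulNr.
Qed.

Lemma W_add (k : fieldType) (W : (nat -> int -> k) -> Prop) f g c :
  closed_subspace W -> W f -> W g -> W (fun a b => f a b + c * g a b).
Proof.
case=> _ [_ [HD [HZ _]]] Wf Wg.
exact: (HD _ _ Wf (HZ c _ Wg)).
Qed.

Inductive span (k : fieldType) (u : nat -> nat -> nat -> int -> k) : (nat -> int -> k) -> Prop :=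
| span0 : span u (fun _ _ => 0)
| spanS g c i j : span u g -> span u (fun a b => g a b + c * u i j a b).

Lemma span_W (k : fieldType) (W : (nat -> int -> k) -> Prop) u g :
  closed_subspace W -> (forall i j, W (u i j)) -> span u g -> W g.
Proof.
move=> hW Wu; elim=> [|g' c i j _ IH]; first by case: hW => _ [].
exact: W_add.
Qed.

Lemma span_add (k : fieldType) u (g h : nat -> int -> k) :
  span u g -> span u h -> span u (fun a b => g a b + h a b).
Proof.
move=> sg; elim=> [|h' c i j _ IH].
  by have -> : (fun a b => g a b + 0) = g by apply: funext2 => a b; rewrite addr0.
have -> : (fun a b => g a b + (h' a b + c * u i j a b)) =
          (fun a b => (g a b + h' a b) + c * u i j a b).
  by apply: funext2 => a b; rewrite addrA.
exact: spanS.
Qed.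

Lemma delta_sum (k : fieldType) n i (F : nat -> k) : (i < n)%N ->
  \sum_(x < n) (if (x : nat) == i then F x else 0) = F i.
Proof. by move=> lt; rewrite -big_mkcond big_ord1_eq lt. Qed.

Lemma span_sum (k : fieldType) u (g : nat -> int -> k) :
  span u g -> exists N (c : nat -> nat -> k), forall a b,
    g a b = \sum_(i < N) \sum_(j < N) c i j * u i j a b.
Proof.
elim=> [|g' c i j _ [N [c0 IH]]].
  by exists 0%N, (fun _ _ => 0) => a b; rewrite big_ord0.
set N' := (maxn N (maxn i j)).+1.
have hN : (N <= N')%N by rewrite /N' leqW // leq_maxl.
have hi : (i < N')%N by rewrite /N' ltnS (leq_trans _ (leq_maxr _ _)) // leq_maxl.
have hj : (j < N')%N by rewrite /N' ltnS (leq_trans _ (leq_maxr _ _)) // leq_maxr.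
exists N', (fun x y => (if (x < N)%N && (y < N)%N then c0 x y else 0) +
                    (if (x == i) && (y == j) then c else 0)) => a b.
rewrite IH; symmetry.
under eq_bigr => x _ do under eq_bigr => y _ do rewrite mulrDl.
under eq_bigr => x _ do rewrite big_split /=.
rewrite big_split /=; congr (_ + _).
  symmetry; rewrite (big_ord_widen N' (fun x => \sum_(y < N) c0 x y * u x y a b) hN) big_mkcond /=; apply: eq_bigr => x _.
  case: ifP => hx.
    rewrite (big_ord_widen N' (fun y => c0 x y * u x y a b) hN) big_mkcond /=; apply: eq_bigr => y _.
    by case: ifP => hy; rewrite ?mul0r.
  by rewrite big1 // => y _; rewrite /= mul0r.
rewrite (eq_bigr (fun x : 'I_N' => if (x : nat) == i then
           \sum_(y < N') (if (y : nat) == j then c * u i j a b else 0) else 0)).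
  by rewrite (delta_sum (fun _ => \sum_(y < N') (if (y : nat) == j then c * u i j a b else 0))) //
     (delta_sum (fun _ => c * u i j a b)).
move=> x _; case: eqP => [->|hx]; last first.
  by rewrite big1 // => y _; rewrite mul0r.
by apply: eq_bigr => y _; rewrite /=; case: ifP => [/eqP ->|_]; rewrite ?mul0r.
Qed.

Lemma LT_exists (k : fieldType) (v : nat -> int -> k) a1 b1 :
  inV v -> v a1 b1 != 0 -> exists a b, lowest_term_at v a b.
Proof.
move=> [[b0 Hb0] HA].
suff H : forall n a b, (absz (b - b0) < n)%N -> v a b != 0 -> exists a' b', lowest_term_at v a' b'.
  by move=> nz; apply: (H (absz (b1 - b0)).+1 a1 b1).
elim=> // n IH a b hn nz.
have hb : b0 <= b.
  by rewrite leNgt; apply/negP => /(Hb0 a) h; move: nz; rewrite h eqxx.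
case: (classic (exists a' (b' : int), b' < b /\ v a' b' != 0)) => [[a' [b' [lt nz']]]|none].
  apply: (IH a' b') => //.
  have hb' : b0 <= b'.
    by rewrite leNgt; apply/negP => /(Hb0 a') h; move: nz'; rewrite h eqxx.
  lia.
have below : forall (b' : int) a', b' < b -> v a' b' = 0.
  move=> b' a' lt; apply: NNPP => h; apply: none; exists a', b'; split => //.
  exact/eqP.
have [A HAb] := HA b.
have exP : exists x, (fun x => v x b != 0) x by exists a.
have ubP : forall x, (fun x => v x b != 0) x -> (x <= A)%N.
  move=> x /= hx; rewrite leqNgt; apply/negP => h.
  by move: hx; rewrite HAb ?eqxx // ltnW.
case: (ex_maxnP exP ubP) => am ham hmax.
exists am, b; split => //; split => // a' lt.
by apply/eqP; apply: contraTT lt => h; rewrite -leqNgt; apply: hmax.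
Qed.

Lemma W_zero (k : fieldType) (W : (nat -> int -> k) -> Prop) d :
  closed_subspace W -> supp_is_W0 W -> W d ->
  (forall a (b : int), b <= 0 -> d a b = 0) -> forall a b, d a b = 0.
Proof.
move=> hW [hS _] Wd hz a b; apply: NNPP => nz.
have [a' [b' lt]] := LT_exists (W_V hW Wd) (introN eqP nz).
have := hS _ Wd _ _ lt => hb'.
by case: lt; rewrite hz // eqxx.
Qed.

Lemma clear_level (k : fieldType) (W : (nat -> int -> k) -> Prop) u :
  closed_subspace W -> (forall i j, W (u i j) /\ lowest_term_at (u i j) i (- (j%:Z))) ->
  forall j A v, inV v -> (forall a (b : int), b < - (j%:Z) -> v a b = 0) ->
  (forall a, (A <= a)%N -> v a (- (j%:Z)) = 0) ->
  exists g, span u g /\ forall a b, b <= - (j%:Z) -> v a b = g a b.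
Proof.
move=> hW hu j; elim=> [|A IH] v Vv h1 h2.
  exists (fun _ _ => 0); split; first exact: span0.
  move=> a b; rewrite le_eqVlt => /orP[/eqP ->|lt]; first exact: h2.
  exact: h1.
have [Wu [nz [lo hi]]] := hu A j.
set c := v A (- (j%:Z)) / u A j A (- (j%:Z)).
have e1 : forall a (b : int), b < - (j%:Z) -> v a b - c * u A j a b = 0.
  by move=> a b lt; rewrite h1 // lo // mulr0 subr0.
have e2 : forall a, (A <= a)%N -> v a (- (j%:Z)) - c * u A j a (- (j%:Z)) = 0.
  move=> a; rewrite leq_eqVlt => /orP[/eqP <-|lt].
    by rewrite /c divfK // subrr.
  by rewrite h2 // hi // mulr0 subr0.
have [g [sg Hg]] := IH (fun a b => v a b - c * u A j a b) (inV_lin c Vv (W_V hW Wu)) e1 e2.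
exists (fun a b => g a b + c * u A j a b); split; first exact: spanS.
by move=> a b hb; rewrite -Hg // subrK.
Qed.

Lemma reduce (k : fieldType) (W : (nat -> int -> k) -> Prop) u :
  closed_subspace W -> (forall i j, W (u i j) /\ lowest_term_at (u i j) i (- (j%:Z))) ->
  forall v, inV v -> exists g, span u g /\ forall a (b : int), b <= 0 -> v a b = g a b.
Proof.
move=> hW hu.
have Wu : forall i j, W (u i j) by move=> i j; case: (hu i j).
suff H : forall n v, inV v -> (forall a (b : int), b < - (n%:Z) -> v a b = 0) ->
   exists g, span u g /\ forall a (b : int), b <= 0 -> v a b = g a b.
  move=> v Vv; case: (Vv) => [[b0 Hb0] _]; apply: (H (absz b0)) => // a b lt.
  apply: Hb0; lia.
elim=> [|n IH] v Vv hv.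
  have [A HA] := Vv.2 0.
  have [g [sg Hg]] := clear_level (j:=0) hW hu Vv hv HA.
  by exists g; split.
have [A HA] := Vv.2 (- (n.+1%:Z)).
have [g1 [sg1 Hg1]] := clear_level (j:=n.+1) hW hu Vv hv HA.
have e1 : forall a (b : int), b < - (n%:Z) -> v a b - 1 * g1 a b = 0.
  move=> a b lt; rewrite Hg1 ?mul1r ?subrr //; lia.
have [g2 [sg2 Hg2]] := IH (fun a b => v a b - 1 * g1 a b)
    (inV_lin 1 Vv (W_V hW (span_W hW Wu sg1))) e1.
exists (fun a b => g1 a b + g2 a b); split; first exact: span_add.
by move=> a b hb; rewrite -Hg2 // mul1r addrC subrK.
Qed.

Definition id0 (k : fieldType) (q a b : nat) : k :=
  if [&& q == 0%N, a == 0%N & b == 0%N] then 1 else 0.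

Definition lowS (k : fieldType) (s : nat -> nat -> nat -> nat -> k) (i j : nat) :=
  fun m q al be => if [&& m != 0%N, al == i & be == j] then 0 else s m q al be.

Lemma monact_ext (k : fieldType) (s s' : nat -> nat -> nat -> nat -> k) i j a b :
  (forall m q al be, (al <= i)%N -> (be <= j)%N -> s m q al be = s' m q al be) ->
  monact s i j a b = monact s' i j a b.
Proof.
move=> H; rewrite /monact; apply: eq_bigr => al _; apply: eq_bigr => be _.
cbv zeta; rewrite H // -ltnS //.
Qed.

Lemma monact_split (k : fieldType) (s : nat -> nat -> nat -> nat -> k) i j a b :
  monact s i j a b = monact (lowS s i j) i j a b +
     (if 0 < b then (i`! * j`!)%:R * s (absz b) a i j else 0).
Proof.
suff <- : monact s i j a b - monact (lowS s i j) i j a b =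
     (if 0 < b then (i`! * j`!)%:R * s (absz b) a i j else 0).
  by rewrite addrC subrK.
rewrite /monact -sumrB.
under eq_bigr => al _ do rewrite -sumrB.
rewrite (eq_bigr (fun al : 'I_i.+1 => if (al : nat) == i then
   \sum_(be < j.+1) (if (be : nat) == j then
     (if 0 < b then (i`! * j`!)%:R * s (absz b) a i j else 0) else 0) else 0)); last first.
  move=> al _; case: eqP => [hal|hal]; last first.
    rewrite big1 // => be _; cbv zeta; rewrite /lowS.
    have -> : (al == i :> nat) = false by apply/eqP.
    by rewrite andFb andbF subrr.
  apply: eq_bigr => be _; case: eqP => [hbe|hbe]; last first.
    cbv zeta; rewrite /lowS.
    have -> : (be == j :> nat) = false by apply/eqP.
    by rewrite !andbF subrr.
  cbv zeta; rewrite hal hbe leq_addl addrK addnK !binn /lowS !eqxx !andbT.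
  case: (ltrgtP b 0) => hb.
  - by rewrite subrr.
  - have -> : (absz b != 0%N) = true by apply/eqP; lia.
    by rewrite /= mulr0 subr0 !mul1r natrM.
  - by rewrite hb /= subrr.
by rewrite (delta_sum (fun _ => \sum_(be < j.+1) (if (be : nat) == j then
     (if 0 < b then (i`! * j`!)%:R * s (absz b) a i j else 0) else 0))) //
   (delta_sum (fun _ => (if 0 < b then (i`! * j`!)%:R * s (absz b) a i j else 0))).
Qed.

Lemma monact_low (k : fieldType) (s : nat -> nat -> nat -> nat -> k) i j a (b : int) :
  (forall q al be, s 0%N q al be = id0 k q al be) -> b <= - (j%:Z) ->
  monact s i j a b = if (b == - (j%:Z)) && (a == i) then 1 else 0.
Proof.
move=> hs hb; rewrite /monact.
set X := (if (b == - (j%:Z)) && (a == i) then (1 : k) else 0).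
rewrite (eq_bigr (fun al : 'I_i.+1 => if (al : nat) == 0%N then
   \sum_(be < j.+1) (if (be : nat) == 0%N then X else 0) else 0)); last first.
  move=> al _; case: (boolP ((al : nat) == 0%N)) => [/eqP h0|h0]; last first.
    rewrite big1 // => be _; cbv zeta; case: ifP => // _; case: ifP => // he.
    have hbe : (be : nat) = 0%N by lia.
    rewrite hbe subr0.
    have -> : b + j%:Z = 0 by lia.
    by rewrite /= hs /id0 (negbTE h0) andbF mulr0.
  apply: eq_bigr => be _; case: (boolP ((be : nat) == 0%N)) => [/eqP hbe|hbe]; last first.
    by cbv zeta; case: ifP => // _; case: ifP => // he; exfalso; lia.
  rewrite h0 hbe; cbv zeta; rewrite /X addn0 subr0.
  case: (boolP (b == - (j%:Z))) => [/eqP hbj|hbj]; last first.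
    have -> : (0 <= b + j%:Z) = false by apply/negbTE; rewrite -ltNge; lia.
    by case: ifP.
  rewrite hbj addNr lexx /= hs /id0 !bin0 !fact0 !mul1r.
  case: (boolP (a == i)) => [/eqP ->|hai]; first by rewrite leqnn subnn.
  case: ifP => // hia.
  have -> : (a - i == 0)%N = false by apply/negbTE; lia.
  done.
by rewrite (delta_sum (fun _ => \sum_(be < j.+1) (if (be : nat) == 0%N then X else 0))) //
   (delta_sum (fun _ => X)).
Qed.

Lemma monact_LT (k : fieldType) (s : nat -> nat -> nat -> nat -> k) i j :
  (forall q al be, s 0%N q al be = id0 k q al be) ->
  lowest_term_at (monact s i j) i (- (j%:Z)).
Proof.
move=> hs; split; first by rewrite monact_low // !eqxx oner_eq0.
split.
  by move=> b' a' lt; rewrite monact_low ?(ltW lt) // (lt_eqF lt).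
move=> a' lt; rewrite monact_low // eqxx /=.
by have -> : (a' == i) = false by apply/negbTE; rewrite neq_ltn lt orbT.
Qed.

Lemma box1 (P : nat -> nat -> Prop) :
  (forall x, exists Q, forall q, (Q <= q)%N -> P x q) ->
  forall N, exists Q, forall x q, (x < N)%N -> (Q <= q)%N -> P x q.
Proof.
move=> H; elim=> [|N [Q0 IH]]; first by exists 0%N.
have [Q1 H1] := H N; exists (maxn Q0 Q1) => x q hx; rewrite geq_max => /andP[h0 h1].
move: hx; rewrite ltnS leq_eqVlt => /orP[/eqP ->|hx]; first exact: H1.
exact: IH.
Qed.

Lemma box2 (P : nat -> nat -> nat -> Prop) :
  (forall x y, exists Q, forall q, (Q <= q)%N -> P x y q) ->
  forall N, exists Q, forall x y q, (x < N)%N -> (y < N)%N -> (Q <= q)%N -> P x y q.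
Proof.
move=> H N.
have H' : forall x, exists Q, forall q, (Q <= q)%N -> forall y, (y < N)%N -> P x y q.
  move=> x; have [Q HQ] := box1 (P := fun y q => P x y q) (H x) N.
  by exists Q => q hq y hy; apply: HQ.
have [Q HQ] := box1 H' N.
by exists Q => x y q hx hy hq; apply: HQ.
Qed.

Definition fsupp (k : fieldType) (s : nat -> nat -> nat -> nat -> k) :=
  forall m al be, exists Q, forall q, (Q <= q)%N -> s m q al be = 0.

Lemma monact_inV (k : fieldType) (s : nat -> nat -> nat -> nat -> k) i j :
  fsupp s -> inV (monact s i j).
Proof.
move=> hs; split.
  exists (- (j%:Z)) => a b lt; rewrite /monact big1 // => al _; rewrite big1 // => be _.
  cbv zeta; case: ifP => // _; case: ifP => // he; exfalso; lia.
move=> b.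
have [Q HQ] := box2 (P := fun al be q => s (absz (b + j%:Z - be%:Z)%R) q al be = 0)
  (fun x y => hs _ x y) (maxn i j).+1.
exists (Q + i)%N => a ha; rewrite /monact big1 // => al _; rewrite big1 // => be _.
cbv zeta; case: ifP => // hia; case: ifP => // he.
rewrite HQ ?mulr0 //.
- by rewrite ltnS (leq_trans _ (leq_maxl _ _)) // -ltnS.
- by rewrite ltnS (leq_trans _ (leq_maxr _ _)) // -ltnS.
- lia.
Qed.

Lemma lowS_agree (k : fieldType) (s s' : nat -> nat -> nat -> nat -> k) i j a b :
  (forall m q x y, (x <= i)%N -> (y <= j)%N -> (x + y < i + j)%N -> s m q x y = s' m q x y) ->
  (forall q, s 0%N q i j = s' 0%N q i j) ->
  monact (lowS s i j) i j a b = monact (lowS s' i j) i j a b.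
Proof.
move=> H H0; apply: monact_ext => m q x y hx hy; rewrite /lowS.
case: (boolP ((x == i) && (y == j))) => [/andP[/eqP ex /eqP ey]|hxy].
  rewrite ex ey andbT; case: (boolP (m != 0%N)) => //=.
  by rewrite negbK => /eqP ->; apply: H0.
rewrite andbF /=.
apply: H => //; move: hxy; rewrite negb_and => /orP[] /eqP h; lia.
Qed.

Definition step (k : fieldType) (cw : (nat -> int -> k) -> (nat -> int -> k))
  (sn : nat -> nat -> nat -> nat -> k) (n : nat) : nat -> nat -> nat -> nat -> k :=
  fun m q al be =>
  if m == 0%N then id0 k q al be
  else if (al + be < n)%N then sn m q al be
  else if (al + be == n)%N then
     (cw (monact sn al be) q m%:Z - monact sn al be q m%:Z) / (al`! * be`!)%:R
  else 0.

Fixpoint Fs (k : fieldType) (cw : (nat -> int -> k) -> (nat -> int -> k)) (n : nat) :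
   nat -> nat -> nat -> nat -> k :=
  match n with
  | 0%N => fun m q al be => if m == 0%N then id0 k q al be else 0
  | n'.+1 => step cw (Fs cw n') n'
  end.

Definition sfin (k : fieldType) (cw : (nat -> int -> k) -> (nat -> int -> k)) :=
  fun m q al be => Fs cw (al + be).+1 m q al be.

Lemma Fs0 (k : fieldType) cw n q al be : Fs (k:=k) cw n 0%N q al be = id0 k q al be.
Proof. by case: n. Qed.

Lemma Fs_high (k : fieldType) cw n m q al be :
  m != 0%N -> (n <= al + be)%N -> Fs (k:=k) cw n m q al be = 0.
Proof.
move=> hm; elim: n => [|n IH] hn /=; first by rewrite (negbTE hm).
rewrite /step (negbTE hm).
have -> : (al + be < n)%N = false by apply/negbTE; rewrite -leqNgt ltnW.
by have -> : (al + be == n)%N = false by apply/negbTE; rewrite neq_ltn hn orbT.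
Qed.

Lemma Fs_stab (k : fieldType) cw n n' m q al be :
  (al + be < n)%N -> (n <= n')%N -> Fs (k:=k) cw n' m q al be = Fs cw n m q al be.
Proof.
move=> hl; elim: n' => [|n' IH].
  by rewrite leqn0 => /eqP ->.
rewrite leq_eqVlt => /orP[/eqP -> //|hn].
rewrite /= /step IH //; case: ifP => [/eqP ->|_]; first by rewrite Fs0.
by rewrite (leq_trans hl).
Qed.

Lemma sfin_F (k : fieldType) cw n m q al be :
  (al + be < n)%N -> sfin (k:=k) cw m q al be = Fs cw n m q al be.
Proof.
move=> h; rewrite /sfin.
case: (leqP n (al + be).+1) => hn.
  by rewrite (Fs_stab _ _ _ h hn).
by rewrite (Fs_stab _ _ _ (ltnSn _) (ltnW hn)).
Qed.

Lemma Fs_fsupp (k : fieldType) (W : (nat -> int -> k) -> Prop) cw :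
  closed_subspace W ->
  (forall v, inV v -> W (cw v) /\ forall a (b : int), b <= 0 -> v a b = cw v a b) ->
  forall n, fsupp (Fs cw n).
Proof.
move=> hW hcw; elim=> [|n IH] m al be /=.
  exists 1%N => q hq; case: ifP => // _.
  by rewrite /id0; have -> : (q == 0%N) = false by apply/negbTE; rewrite -lt0n.
rewrite /step; case: (boolP (m == 0%N)) => hm.
  exists 1%N => q hq /=.
  by rewrite /id0; have -> : (q == 0%N) = false by apply/negbTE; rewrite -lt0n.
case: (boolP (al + be < n)%N) => h1.
  have [Q HQ] := IH m al be; by exists Q => q hq /=; rewrite HQ.
case: (boolP (al + be == n)%N) => h2; last by exists 0%N.
have VL := monact_inV al be IH.
have VC := W_V hW (hcw _ VL).1.
have [A1 H1] := VL.2 (m%:Z); have [A2 H2] := VC.2 (m%:Z).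
exists (maxn A1 A2) => q; rewrite geq_max => /andP[q1 q2].
rewrite /=.
by rewrite H1 // H2 // subrr mul0r.
Qed.

Lemma Fs_key (k : fieldType) (char0 : [pchar k] =i pred0) (W : (nat -> int -> k) -> Prop) cw :
  closed_subspace W ->
  (forall v, inV v -> W (cw v) /\ forall a (b : int), b <= 0 -> v a b = cw v a b) ->
  forall i j a b, monact (Fs cw (i + j).+1) i j a b = cw (monact (Fs cw (i + j)) i j) a b.
Proof.
move=> hW hcw i j a b.
rewrite monact_split.
have -> : monact (lowS (Fs cw (i + j).+1) i j) i j a b =
          monact (lowS (Fs cw (i + j)) i j) i j a b.
  apply: lowS_agree => [m q x y hx hy hxy|q]; last by rewrite !Fs0.
  by rewrite (Fs_stab _ _ _ hxy (leqnSn _)).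
have -> : monact (lowS (Fs cw (i + j)) i j) i j a b = monact (Fs cw (i + j)) i j a b.
  apply: monact_ext => m q x y hx hy; rewrite /lowS.
  case: ifP => // /and3P[hm /eqP -> /eqP ->].
  by rewrite Fs_high.
have VL := monact_inV i j (Fs_fsupp hW hcw (i + j)).
case: ifP => hb; last first.
  by rewrite addr0 (hcw _ VL).2 // leNgt hb.
rewrite /= /step.
have -> : (absz b == 0%N) = false by apply/negbTE; apply/eqP; lia.
rewrite ltnn eqxx.
have -> : (absz b)%:Z = b by lia.
rewrite mulrC divfK; first by rewrite addrC subrK.
by rewrite natf_ne0 // muln_gt0 !fact_gt0.
Qed.

Lemma W_bigsum (k : fieldType) (W : (nat -> int -> k) -> Prop) :
  closed_subspace W -> forall n (F : 'I_n -> nat -> int -> k),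
  (forall i, W (F i)) -> W (fun a b => \sum_(i < n) F i a b).
Proof.
move=> hW; elim=> [|n IH] F HF.
  have -> : (fun a b => \sum_(i < 0) F i a b) = (fun _ _ => 0).
    by apply: funext2 => a b; rewrite big_ord0.
  by case: hW => _ [].
have -> : (fun a b => \sum_(i < n.+1) F i a b) =
   (fun a b => \sum_(i < n) F (widen_ord (leqnSn n) i) a b + 1 * F ord_max a b).
  by apply: funext2 => a b; rewrite big_ord_recr mul1r.
by apply: W_add => //; apply: IH.
Qed.

Lemma equiv_gen (k : fieldType) (W : (nat -> int -> k) -> Prop) s :
  closed_subspace W -> supp_is_W0 W ->
  (forall q al be, s 0%N q al be = id0 k q al be) ->
  (forall i j, W (monact s i j)) ->
  forall f, inW0S s f <-> W f.
Proof.
move=> hW hS hs0 hsW f; split.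
  move=> [N [c Hf]].
  have -> : f = (fun a b => \sum_(i < N) \sum_(j < N) c i j * monact s i j a b).
    exact: funext2.
  apply: W_bigsum => // i; apply: W_bigsum => // j.
  have -> : (fun a b => c i j * monact s i j a b) = (fun a b => 0 + c i j * monact s i j a b).
    by apply: funext2 => a b; rewrite add0r.
  by apply: W_add => //; case: hW => _ [].
move=> Wf.
have hu : forall i j, W (monact s i j) /\ lowest_term_at (monact s i j) i (- (j%:Z)).
  by move=> i j; split; [apply: hsW | apply: monact_LT].
have [g [sg Hg]] := reduce hW hu (W_V hW Wf).
have Wg := span_W hW hsW sg.
have Hz : forall a b, f a b - 1 * g a b = 0.
  apply: (W_zero hW hS (W_lin 1 hW Wf Wg)) => a b hb.
  by rewrite Hg // mul1r subrr.
have [N [c Hc]] := span_sum sg.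
exists N, c => a b; rewrite -Hc; apply/eqP; rewrite -subr_eq0 -(mul1r (g a b)).
exact/eqP.
Qed.

Lemma uniq_gen (k : fieldType) (char0 : [pchar k] =i pred0) (W : (nat -> int -> k) -> Prop) s s' :
  closed_subspace W -> supp_is_W0 W ->
  (forall q al be, s 0%N q al be = id0 k q al be) ->
  (forall i j, W (monact s i j)) ->
  (forall q al be, s' 0%N q al be = id0 k q al be) ->
  (forall i j, W (monact s' i j)) ->
  forall m q al be, s' m q al be = s m q al be.
Proof.
move=> hW hS hs0 hsW hs0' hsW'.
suff H : forall n m q al be, (al + be < n)%N -> s' m q al be = s m q al be.
  by move=> m q al be; apply: (H (al + be).+1).
elim=> // n IH m q al be; rewrite ltnS leq_eqVlt => /orP[/eqP hn|hl]; last exact: IH.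
case: (boolP (m == 0%N)) => [/eqP ->|hm]; first by rewrite hs0 hs0'.
pose D := fun a b => monact s' al be a b - 1 * monact s al be a b.
have hlow : forall a b, monact (lowS s' al be) al be a b = monact (lowS s al be) al be a b.
  move=> a b; apply: lowS_agree => [m' q' x y _ _ hxy|q']; last by rewrite hs0 hs0'.
  by apply: IH; rewrite -hn.
have HD : forall a b, D a b = 0.
  apply: (W_zero hW hS (W_lin 1 hW (hsW' al be) (hsW al be))) => a b hb.
  rewrite (monact_split s') (monact_split s) hlow.
  by rewrite ltNge hb /= mul1r subrr.
have := HD q m%:Z; rewrite /D (monact_split s') (monact_split s) hlow.
have -> : (0 < m%:Z) = true by rewrite ltz_nat lt0n.
rewrite mul1r opprD addrACA subrr add0r /= -mulrBr => /eqP.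
rewrite mulf_eq0 => /orP[h|]; last by rewrite subr_eq0 => /eqP.
by move: h; rewrite (negbTE (natf_ne0 char0 _)) // muln_gt0 !fact_gt0.
Qed.

Theorem theorem1 (k : fieldType) (char0 : [pchar k] =i pred0)
  (W : (nat -> int -> k) -> Prop) :
  closed_subspace W -> supp_is_W0 W ->
  exists s : nat -> nat -> nat -> nat -> k,
    isS s /\ (forall f, inW0S s f <-> W f) /\
    (forall s' : nat -> nat -> nat -> nat -> k,
       isS s' -> (forall f, inW0S s' f <-> W f) ->
       forall m q i j, s' m q i j = s m q i j).
Proof.
move=> hW hS.
have inh : inhabited (nat -> int -> k) by constructor; exact: (fun _ _ => 0).
pose u := fun i j => epsilon inh (fun w => W w /\ lowest_term_at w i (- (j%:Z))).
have hu : forall i j, W (u i j) /\ lowest_term_at (u i j) i (- (j%:Z)).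
  move=> i j; apply: (epsilon_spec inh (fun w => W w /\ lowest_term_at w i (- (j%:Z)))).
  exact: hS.2.
pose cw := fun v => epsilon inh (fun w => W w /\ forall a (b : int), b <= 0 -> v a b = w a b).
have hcw : forall v, inV v -> W (cw v) /\ forall a (b : int), b <= 0 -> v a b = cw v a b.
  move=> v Vv; apply: (epsilon_spec inh (fun w => W w /\ forall a (b : int), b <= 0 -> v a b = w a b)).
  have [g [sg Hg]] := reduce hW hu Vv.
  exists g; split => //; exact: span_W hW (fun i j => (hu i j).1) sg.
pose s := sfin cw.
have hs0 : forall q al be, s 0%N q al be = id0 k q al be by move=> q al be; rewrite /s /sfin Fs0.
have hsW : forall i j, W (monact s i j).
  move=> i j.
  have -> : monact s i j = cw (monact (Fs cw (i + j)) i j).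
    apply: funext2 => a b; rewrite -(Fs_key char0 hW hcw).
    by apply: monact_ext => m q x y hx hy; apply: sfin_F; rewrite ltnS leq_add.
  exact: (hcw _ (monact_inV i j (Fs_fsupp hW hcw (i + j)))).1.
have hfs : fsupp s by move=> m al be; exact: (Fs_fsupp hW hcw (al + be).+1 m al be).
exists s; split; [split|split].
- by move=> q i j; rewrite hs0.
- move=> m _ N.
  have [Q HQ] := box2 (P := fun x y q => s m q x y = 0) (hfs m) N.
  by exists Q => q hq i j hij; apply: HQ => //; lia.
- exact: equiv_gen.
move=> s' [hs0' _] hequiv.
apply: (uniq_gen char0 hW hS hs0 hsW) => // i j.
have sg : span (monact s') (fun a b => 0 + 1 * monact s' i j a b) by apply: spanS; apply: span0.
have [N [c Hc]] := span_sum sg.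
have : W (fun a b => 0 + 1 * monact s' i j a b) by apply/hequiv; exists N, c.
by congr W; apply: funext2 => a b; rewrite add0r mul1r.
Qed.
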